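(* Let $G$ be a connected edge-stable equimatchable graph and let $v\in V(G)$ be a cut vertex. Then every connected component of $G-v$ that is factor-critical consists of a single vertex.
   Context: All graphs are finite and simple. A graph is equimatchable if all its maximal matchings have the same cardinality; an equimatchable graph $G$ is edge-stable if $G\setminus e$ (delete edge $e$, keep vertices) is equimatchable for every $e\in E(G)$. A graph $H$ is factor-critical if $H-x$ has a perfect matching for every $x\in V(H)$. *)

(* Defs.v *)
From mathcomp Require Import all_boot.
Set Implicit Arguments. Unset Strict Implicit. Unset Printing Implicit Defensive.

(* A finite simple graph is given by a vertex set V : {set T} over a finType T
   together with an adjacency relation E : rel T that is symmetric and
   irreflexive; only adjacencies between vertices of V matter. *)

Definition simple_rel (T : finType) (E : rel T) : Prop :=
  symmetric E /\ irreflexive E.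

Definition edges (T : finType) (V : {set T}) (E : rel T) : {set {set T}} :=
  [set [set x; y] | x in V, y in V & E x y].

Definition matching (T : finType) (V : {set T}) (E : rel T) (M : {set {set T}}) : bool :=
  (M \subset edges V E) && trivIset M.

Definition maximal_matching (T : finType) (V : {set T}) (E : rel T) (M : {set {set T}}) : bool :=
  matching V E M &&
  [forall f in edges V E, (f \notin M) ==> ~~ matching V E (f |: M)].

Definition equimatchable (T : finType) (V : {set T}) (E : rel T) : Prop :=
  forall M1 M2 : {set {set T}},
    maximal_matching V E M1 -> maximal_matching V E M2 -> #|M1| = #|M2|.

Definition del_edge (T : finType) (E : rel T) (f : {set T}) : rel T :=
  fun x y => E x y && ([set x; y] != f).

Definition edge_stable (T : finType) (V : {set T}) (E : rel T) : Prop :=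
  equimatchable V E /\ forall f, f \in edges V E -> equimatchable V (del_edge E f).

Definition restr (T : finType) (V : {set T}) (E : rel T) : rel T :=
  [rel x y | [&& x \in V, y \in V & E x y]].

Definition connected (T : finType) (V : {set T}) (E : rel T) : Prop :=
  forall x y, x \in V -> y \in V -> connect (restr V E) x y.

(* v is a cut vertex of (V,E): G - v has more connected components than G,
   i.e. (for connected G) G - v is disconnected *)
Definition cut_vertex (T : finType) (V : {set T}) (E : rel T) (v : T) : Prop :=
  v \in V /\ ~ connected (V :\ v) E.

Definition component (T : finType) (V : {set T}) (E : rel T) (C : {set T}) : Prop :=
  exists2 x, x \in V & C = [set y in V | connect (restr V E) x y].

Definition has_perfect_matching (T : finType) (V : {set T}) (E : rel T) : Prop :=
  exists M : {set {set T}}, matching V E M /\ cover M = V.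

Definition factor_critical (T : finType) (V : {set T}) (E : rel T) : Prop :=
  forall x, x \in V -> has_perfect_matching (V :\ x) E.

(* Main.v *)
Require Import Defs.
From mathcomp Require Import all_boot.
Set Implicit Arguments. Unset Strict Implicit. Unset Printing Implicit Defensive.

Section H.
Variables (T : finType).

Lemma edgesP (V : {set T}) (E : rel T) g :
  reflect (exists a b, [/\ a \in V, b \in V, E a b & g = [set a; b]]) (g \in edges V E).
Proof.
apply: (iffP imset2P).
  by case=> a b aV; rewrite inE => /andP[bV eab] ->; exists a, b.
by case=> a [b [aV bV eab ->]]; apply: (@Imset2spec _ _ _ _ _ _ _ a b aV); rewrite ?inE ?bV ?eab.
Qed.

Lemma edges_del (V : {set T}) (E : rel T) f g :
  (g \in edges V (del_edge E f)) = (g \in edges V E) && (g != f).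
Proof.
apply/idP/andP.
  case/edgesP=> a [b [aV bV /andP[eab ne] ->]]; split=> //.
  by apply/edgesP; exists a, b.
case=> /edgesP [a [b [aV bV eab gE]]] ne; apply/edgesP; exists a, b; split=> //.
by rewrite /del_edge eab -gE.
Qed.

Lemma edges_subV (V1 V : {set T}) (E : rel T) :
  V1 \subset V -> edges V1 E \subset edges V E.
Proof.
move=> s; apply/subsetP=> g /edgesP [a [b [aV bV eab ->]]].
by apply/edgesP; exists a, b; split=> //; apply: (subsetP s).
Qed.

Lemma matching_subM (V : {set T}) (E : rel T) (M M' : {set {set T}}) :
  M' \subset M -> matching V E M -> matching V E M'.
Proof.
move=> s /andP[sE tM]; apply/andP; split; first exact: subset_trans sE.
exact: trivIsetS tM.
Qed.

Lemma matching_subE (V : {set T}) (E E' : rel T) (M : {set {set T}}) :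
  edges V E \subset edges V E' -> matching V E M -> matching V E' M.
Proof. by move=> s /andP[sE tM]; rewrite /matching tM (subset_trans sE s). Qed.

Lemma extend_max (V : {set T}) (E : rel T) (M0 : {set {set T}}) :
  matching V E M0 -> exists2 M : {set {set T}}, M0 \subset M & maximal_matching V E M.
Proof.
move=> m0.
have P0 : matching V E M0 && (M0 \subset M0) by rewrite m0 subxx.
case: (@arg_maxnP _ M0 (fun M : {set {set T}} => matching V E M && (M0 \subset M)) (fun M : {set {set T}} => #|M|) P0) => M /andP[mM sM] Mmax.
exists M => //; rewrite /maximal_matching mM /=.
apply/forall_inP => g gE; apply/implyP => gM; apply/negP => mg.
have := Mmax (g |: M); rewrite mg (subset_trans sM (subsetUr _ _)) => /(_ isT).
by rewrite cardsU1 gM /= ltnn.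
Qed.

Lemma maximal_sub (V : {set T}) (E E' : rel T) (M : {set {set T}}) :
  edges V E' \subset edges V E -> M \subset edges V E' ->
  maximal_matching V E M -> maximal_matching V E' M.
Proof.
move=> sE sM /andP[/andP[_ tM] mx]; rewrite /maximal_matching /matching sM tM /=.
apply/forall_inP => g gE; apply/implyP => gM; apply/negP => mg.
have /forall_inP/(_ g (subsetP sE _ gE)) := mx; rewrite gM /= => /negP; apply.
exact: matching_subE mg.
Qed.

Lemma triv_contra (M : {set {set T}}) (g h : {set T}) z t :
  trivIset M -> g \in M -> h \in M -> z \in g -> z \notin h -> t \in g -> t \in h -> False.
Proof.
move=> /trivIsetP tM gM hM zg zh tg th.
have ne : g != h by apply: contraNneq zh => <-.
by have := disjointFr (tM _ _ gM hM ne) tg; rewrite th.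
Qed.

End H.

Lemma find_nbr (T : finType) (V : {set T}) (E : rel T) v x0 :
  x0 \in V :\ v -> connect (restr V E) x0 v ->
  exists u, [/\ u \in V :\ v, connect (restr (V :\ v) E) x0 u & E u v].
Proof.
move=> x0V /connectP [p].
suff H : forall z, z \in V :\ v -> connect (restr (V :\ v) E) x0 z ->
  path (restr V E) z p -> v = last z p ->
  exists u, [/\ u \in V :\ v, connect (restr (V :\ v) E) x0 u & E u v].
  exact: H x0V (connect0 _ _).
elim: p => [|w p IH] z zV cz /=.
  by move=> _ vz; move: zV; rewrite vz !inE eqxx.
case/andP => /and3P[_ wV ezw] pw lw.
case: (eqVneq w v) => [wv | wnv].
  by exists z; split=> //; rewrite -wv.
have wV' : w \in V :\ v by rewrite !inE wnv.
apply: (IH w wV' _ pw lw).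
apply: (connect_trans cz); apply: connect1; exact/and3P.
Qed.

Theorem lemma4p7 (T : finType) (V : {set T}) (E : rel T) (v : T) :
  simple_rel E ->
  connected V E ->
  edge_stable V E ->
  cut_vertex V E v ->
  forall C : {set T},
    component (V :\ v) E C ->
    factor_critical C E ->
    #|C| = 1.
Proof.
move=> [Esym Eirr] Hconn [Heq Hst] [vV _] C [x0 x0V HC] Hfc.
have inC z : (z \in C) = (z \in V :\ v) && connect (restr (V :\ v) E) x0 z.
  by rewrite HC inE.
have x0C : x0 \in C by rewrite inC x0V connect0.
have CV : C \subset V by apply/subsetP => z; rewrite inC !inE => /andP[/andP[_ ->]].
have vC : v \notin C by rewrite inC !inE eqxx.
have nbC z t : z \in C -> t \in V -> E z t -> t != v -> t \in C.
  rewrite !inC => /andP[zV cz] tV ezt tv.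
  have tV' : t \in V :\ v by rewrite !inE tv.
  rewrite tV' /=; apply: (connect_trans cz); apply: connect1; exact/and3P.
have [u [uV cu euv]] := find_nbr x0V (Hconn _ _ (subsetP (subsetDl V [set v]) _ x0V) vV).
have uC : u \in C by rewrite inC uV cu.
case: (eqVneq #|C| 1) => // HC1; exfalso.
have : 0 < #|C :\ u|.
  move: HC1; rewrite (cardsD1 u C) uC add1n.
  by case: (#|C :\ u|).
rewrite card_gt0 => /set0Pn [w wCu].
have [Q [/andP[QE QT] QC]] := Hfc u uC.
move: wCu; rewrite -QC => /bigcupP [f fQ wf].
have /edgesP [x [y [xCu yCu exy fxy]]] := subsetP QE _ fQ.
have xC : x \in C by move: xCu; rewrite !inE => /andP[].
have yC : y \in C by move: yCu; rewrite !inE => /andP[].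
have xy : x != y by apply/eqP => xy'; move: exy; rewrite xy' Eirr.
have CuV : C :\ u \subset V := subset_trans (subsetDl C [set u]) CV.
have fE : f \in edges V E by apply: (subsetP (edges_subV E CuV)); apply: (subsetP QE).
have fC : f \subset C :\ u by rewrite fxy; apply/subsetP => z; rewrite !inE => /orP[/eqP->|/eqP->]; rewrite ?inE in xCu yCu *.
have vf : v \notin f by apply: contra vC => /(subsetP fC); rewrite inE => /andP[].
set E' := del_edge E f.
have sE'E : edges V E' \subset edges V E by apply/subsetP => g; rewrite edges_del => /andP[].
have [N [/andP[NE NT] NC]] := Hfc x xC.
have CxV : C :\ x \subset V := subset_trans (subsetDl C [set x]) CV.
have Nm : matching V E N by rewrite /matching NT (subset_trans NE (edges_subV E CxV)).
have [M2 sNM2 mM2] := extend_max Nm.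
have M2T : trivIset M2 by case/andP: mM2 => /andP[].
have fM2 : f \notin M2.
  apply/negP => fM2.
  have : y \in cover N by rewrite NC !inE yC andbT eq_sym.
  case/bigcupP => g gN yg.
  have xg : x \notin g.
    apply/negP => xg; have : x \in cover N by apply/bigcupP; exists g.
    by rewrite NC !inE eqxx.
  apply: (triv_contra M2T fM2 (subsetP sNM2 _ gN) _ xg _ yg); by rewrite fxy !inE eqxx ?orbT.
have sM2 : M2 \subset edges V E'.
  apply/subsetP => g gM2; rewrite edges_del.
  case/andP: mM2 => /andP[/subsetP -> //] _ _; rewrite andTb.
  by apply: contraNneq fM2 => <-.
have mM2' := maximal_sub sE'E sM2 mM2.
have uvE : [set u; v] \in edges V E.
  by apply/edgesP; exists u, v; split=> //; move: uV; rewrite !inE => /andP[].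
have uvf : [set u; v] != f by apply: contraNneq vf => <-; rewrite !inE eqxx orbT.
have coverQ h : h \in Q -> (u \notin h) && (v \notin h).
  move=> hQ; have sh : h \subset C :\ u by rewrite -QC; exact: bigcup_sup.
  apply/andP; split; apply/negP => /(subsetP sh); rewrite !inE ?eqxx //.
  by case/andP => _; apply/negP.
have nz0 (W : {set T}) (F : rel T) g : g \in edges W F -> g != set0.
  by case/edgesP => a [b [_ _ _ ->]]; apply/set0Pn; exists a; rewrite !inE eqxx.
set M0 := [set u; v] |: (Q :\ f).
have M0m : matching V E' M0.
  apply/andP; split.
    apply/subsetP => g; rewrite in_setU1 => /orP[/eqP-> | ]; rewrite edges_del.
      by rewrite uvE uvf.
    rewrite !inE => /andP[-> gQ] /=; rewrite andbT.
    exact: (subsetP (edges_subV E CuV)) (subsetP QE _ gQ).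
  have [] // := trivIsetU1 (A := [set u; v]) (P := Q :\ f).
  - move=> h; rewrite !inE => /andP[_ hQ]; case/andP: (coverQ h hQ) => uh vh.
    rewrite disjoint_subset; apply/subsetP => z; rewrite !inE => /orP[/eqP->|/eqP->] //.
  - exact: trivIsetS (subsetDl Q [set f]) QT.
  - by apply/negP; rewrite !inE => /andP[_ /(subsetP QE) /nz0]; rewrite eqxx.
have [M1 sM0M1 mM1] := extend_max M0m.
have M1T : trivIset M1 by case/andP: mM1 => /andP[].
have M1E' : M1 \subset edges V E' by case/andP: mM1 => /andP[].
have fM1 : f \notin M1 by apply/negP => /(subsetP M1E'); rewrite edges_del eqxx andbF.
have uvM1 : [set u; v] \in M1 by apply: (subsetP sM0M1); rewrite !inE eqxx.
have fCu z : z \in f -> z \in C :\ u := subsetP fC z.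
have mf : matching V E (f |: M1).
  apply/andP; split.
    apply/subsetP => g; rewrite in_setU1 => /orP[/eqP-> // | /(subsetP M1E')].
    exact: (subsetP sE'E).
  have [] // := trivIsetU1 (A := f) (P := M1).
  - move=> g gM1; rewrite -setI_eq0; apply/eqP/setP => z; rewrite !inE; apply/negP => /andP[zf zg].
    have gE' := subsetP M1E' _ gM1.
    have gf : g != f by apply: contraNneq fM1 => <-.
    have [t [tV ezt gzt]] : exists t, [/\ t \in V, E z t & g = [set z; t]].
      move: gE'; rewrite edges_del => /andP[/edgesP [a [b [aV bV eab gab]]] _].
      move: zg; rewrite gab !inE => /orP[/eqP-> | /eqP->].
        by exists b.
      by exists a; split=> //; [rewrite Esym | rewrite setUC].
    have zCu := fCu z zf.
    have zu : z != u by move: zCu; rewrite !inE => /andP[].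
    have zv : z != v by apply: contraNneq vC => <-; move: zCu; rewrite !inE => /andP[].
    have tg : t \in g by rewrite gzt !inE eqxx orbT.
    have zuv : z \notin [set u; v] by rewrite !inE negb_or zu zv.
    case: (eqVneq t v) => [tv | tnv].
      by apply: (triv_contra M1T gM1 uvM1 zg zuv tg); rewrite tv !inE eqxx orbT.
    case: (eqVneq t u) => [tu | tnu].
      by apply: (triv_contra M1T gM1 uvM1 zg zuv tg); rewrite tu !inE eqxx.
    have : t \in cover Q by rewrite QC !inE tnu (nbC z t) //; move: zCu; rewrite !inE => /andP[].
    case/bigcupP => h hQ th.
    case: (eqVneq h f) => [hf | hnf].
      move: gf; rewrite gzt; apply/negP; rewrite negbK.
      have zt : z != t by apply/eqP => zt'; move: ezt; rewrite zt' Eirr.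
      move: zf th zt; rewrite hf fxy !inE => /orP[/eqP-> | /eqP->] /orP[/eqP-> | /eqP->]; rewrite ?eqxx //= => _. by rewrite setUC.
    have zh : z \notin h.
      have fh : f != h by rewrite eq_sym.
      by rewrite (disjointFr ((trivIsetP QT) _ _ fQ hQ fh) zf).
    have hM1 : h \in M1 by apply: (subsetP sM0M1); rewrite !inE hnf hQ orbT.
    exact: (triv_contra M1T gM1 hM1 zg zh tg th).
  - by apply/negP => /(subsetP M1E') /nz0; rewrite eqxx.
have mxf : maximal_matching V E (f |: M1).
  rewrite /maximal_matching mf /=; apply/forall_inP => g gE; apply/implyP.
  rewrite in_setU1 negb_or => /andP[gf gM1]; apply/negP => mg.
  have gE' : g \in edges V E' by rewrite edges_del gE gf.
  case/andP: mM1 => _ /forall_inP /(_ g gE') /implyP /(_ gM1) /negP; apply.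
  apply/andP; split.
    by apply/subsetP => h; rewrite in_setU1 => /orP[/eqP-> // | /(subsetP M1E')].
  case/andP: mg => _; apply: trivIsetS; apply: setUS; exact: subsetUr.
have h1 := Heq _ _ mxf mM2.
have h2 := Hst f fE M1 M2 mM1 mM2'.
by move: h1; rewrite cardsU1 fM1 h2 add1n => /eqP; rewrite eqn_leq ltnn.
Qed.
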